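(* For $n\ge2$ and $1\le\ell\le n-1$, let $t_{n,\ell}$ be the number of permutations $\sigma$ of $\{1,\dots,n\}$ avoiding both $1243$ and $1324$ such that $\sigma^{-1}(n)-\sigma^{-1}(1)=1$ (i.e., $1$ is immediately to the left of $n$) and $\sigma(1)=\ell$. Then for $3\le\ell\le n-2$, \[ t_{n,\ell}=t_{n,\ell-1}+t_{n-1,\ell}. \]
   Context: A permutation avoids a pattern $p$ if no subsequence of its one-line notation is order-isomorphic to $p$. *)

(* Defs.v *)
From mathcomp Require Import all_boot all_fingroup.
Set Implicit Arguments. Unset Strict Implicit. Unset Printing Implicit Defensive.

(* Permutations of {1,...,n} are modelled as s : 'S_n acting on 'I_n = {0,...,n-1};
   the value v : 'I_n stands for v+1 and the position i stands for position i+1.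
   One-line notation of s is s 0, s 1, ..., s (n-1). *)

Definition contains (n : nat) (s : 'S_n) (p : seq nat) : bool :=
  [exists f : {ffun 'I_(size p) -> 'I_n},
    [forall a : 'I_(size p), forall b : 'I_(size p),
       ((a < b) ==> (f a < f b)) &&
       ((s (f a) < s (f b)) == (nth 0 p a < nth 0 p b))]].

Definition avoids (n : nat) (s : 'S_n) (p : seq nat) : bool := ~~ contains s p.

(* In 0-based terms: sigma^{-1}(n-1) = sigma^{-1}(0) + 1 and sigma(0) = l - 1. *)
Definition t_count (n l : nat) : nat :=
  #|[set s : 'S_n | [&& avoids s [:: 1; 2; 4; 3],
                        avoids s [:: 1; 3; 2; 4],
                        [exists i : 'I_n, exists j : 'I_n,
                              [&& s i == 0 :> nat, s j == n.-1 :> nat & j == i.+1 :> nat]]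
                      & [exists i : 'I_n, (i == 0 :> nat) && (s i == l.-1 :> nat)] ] ]|.

(* Main.v *)
Require Import Defs.
From mathcomp Require Import all_boot all_fingroup.
From mathcomp Require Import zify.
From Stdlib Require Import Classical ClassicalEpsilon.
Set Implicit Arguments. Unset Strict Implicit. Unset Printing Implicit Defensive.

Definition B (P : Prop) : bool := if excluded_middle_informative P then true else false.
Lemma BP P : reflect P (B P).
Proof. rewrite /B; case: excluded_middle_informative => H; constructor; done. Qed.
Lemma BT (P : Prop) : P -> B P = true. Proof. by move=> H; apply/BP. Qed.
Lemma BF (P : Prop) : ~ P -> B P = false. Proof. by move=> H; apply/BP. Qed.
Lemma Beq (P Q : Prop) : (P <-> Q) -> B P = B Q.
Proof. move=> [H1 H2]; case: (BP P) => h; first by rewrite BT //; auto. by rewrite BF //; auto. Qed.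

Definition bef (t : seq nat) a b := [/\ a \in t, b \in t & index a t < index b t].
Definition occ3 t a b c := bef t a b /\ bef t b c.
Definition occ4 t a b c d := bef t a b /\ bef t b c /\ bef t c d.
Definition p4 a b c d := [&& a < b, b < d & d < c] || [&& a < c, c < b & b < d].
Definition p3 a b c := (a < c < b) || (b < a < c).
Definition av t := ~ exists a b c d, occ4 t a b c d /\ p4 a b c d.
Definition Cc L t := ~ exists a b c, occ3 t a b c /\ [/\ L <= a, L <= b, L <= c & p3 a b c].
Definition Dd v t := exists a b, bef t a b /\ v <= b /\ b < a.
Definition adj n t := index n.-1 t = (index 0 t).+1.
Definition okp n t := av t /\ adj n t.
Definition build j t := j :: map (bump j) t.
Definition Pn n := permutations (iota 0 n).

Lemma bumpE j x : bump j x = if j <= x then x.+1 else x.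
Proof. by rewrite /bump; case: leqP. Qed.
Lemma bump_inj j : injective (bump j). Proof. exact: can_inj (bumpK j). Qed.
Lemma unbumpE j x : unbump j x = if j < x then x.-1 else x.
Proof. by rewrite /unbump; case: ltnP => //= _; [rewrite subn1 | rewrite subn0]. Qed.

Lemma bef_map f t a b : injective f -> bef (map f t) (f a) (f b) <-> bef t a b.
Proof. by move=> fi; rewrite /bef !mem_map // !index_map. Qed.

Lemma bef_cons j s a b : j \notin s ->
  bef (j :: s) a b <-> (a = j /\ b \in s) \/ bef s a b.
Proof.
move=> js; rewrite /bef /= !inE.
have nb: forall x, x \in s -> j != x by move=> x xs; apply/eqP=> E; rewrite E xs in js.
split.
- case=> aI bI h.
  case/orP: aI => [/eqP Ea|aS].
  + subst a; left; split=> //; case/orP: bI h => [/eqP->|//]; by rewrite eqxx.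
  + right; rewrite (negPf (nb _ aS)) in h.
    case/orP: bI h => [/eqP->|bS]; first by rewrite eqxx.
    by rewrite (negPf (nb _ bS)) ltnS.
- case=> [[-> bS]|[aS bS h]].
  + by rewrite eqxx bS orbT (negPf (nb _ bS)).
  + by rewrite aS bS !orbT (negPf (nb _ aS)) (negPf (nb _ bS)) ltnS.
Qed.

Lemma notin_build j t : j \notin map (bump j) t.
Proof. by apply/mapP=> [[x _ /eqP]]; rewrite (negPf (neq_bump j x)). Qed.

Lemma bef_in t a b : bef t a b -> a \in t /\ b \in t. Proof. by case. Qed.
Lemma bef_trans t a b c : bef t a b -> bef t b c -> bef t a c.
Proof. case=> ? ? ? [? ? ?]; split=> //; lia. Qed.
Lemma bef_neq t a b : bef t a b -> a <> b.
Proof. by case=> _ _ h E; rewrite E ltnn in h. Qed.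
Lemma bef_total t a b : a \in t -> b \in t -> a <> b -> bef t a b \/ bef t b a.
Proof.
move=> aT bT ab; case: (ltngtP (index a t) (index b t)) => h.
- by left.
- by right.
- by exfalso; apply: ab; rewrite -(nth_index 0 aT) -(nth_index 0 bT) h.
Qed.


Lemma bump_ltn j x y : (bump j x < bump j y) = (x < y).
Proof. rewrite !bumpE; case: (leqP j x); case: (leqP j y) => *; apply/idP/idP => *; lia. Qed.
Lemma bump_gt j x : (j < bump j x) = (j <= x).
Proof. rewrite !bumpE; case: (leqP j x) => *; apply/idP/idP => *; lia. Qed.
Lemma bump_ge L j x : L <= j -> (L <= bump j x) = (L <= x).
Proof. rewrite !bumpE; case: (leqP j x) => *; apply/idP/idP => *; lia. Qed.
Lemma bump_ge2 L j x : j < L -> (L <= bump j x) = (L.-1 <= x).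
Proof. rewrite !bumpE; case: (leqP j x) => *; apply/idP/idP => *; lia. Qed.
Lemma p3_bump j a b c : p3 (bump j a) (bump j b) (bump j c) = p3 a b c.
Proof. by rewrite /p3 !bump_ltn. Qed.
Lemma p4_bump j a b c d : p4 (bump j a) (bump j b) (bump j c) (bump j d) = p4 a b c d.
Proof. by rewrite /p4 !bump_ltn. Qed.

Lemma bef_mapE f t a b : injective f ->
  bef (map f t) a b <-> exists a0 b0, [/\ a = f a0, b = f b0 & bef t a0 b0].
Proof.
move=> fi; split.
- move=> h; have [/mapP[a0 _ Ea] /mapP[b0 _ Eb]] := bef_in h; subst a b.
  by exists a0, b0; split=> //; apply/(bef_map _ _ _ fi).
- by case=> a0 [b0 [-> -> h]]; apply/(bef_map _ _ _ fi).
Qed.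

Lemma occ3_cons j s a b c : j \notin s ->
  occ3 (j :: s) a b c <-> (a = j /\ bef s b c) \/ occ3 s a b c.
Proof.
move=> js; rewrite /occ3 !bef_cons //; split.
- case=> [[[-> bS] | h1]] [[Ebj cS]|h2].
  + by subst b; rewrite bS in js.
  + by left.
  + by subst b; move: (bef_in h1) => [_ jS]; rewrite jS in js.
  + by right.
- case=> [[-> h]|[h1 h2]].
  + by split; [left; split=> //; case: (bef_in h) | right].
  + by split; right.
Qed.

Lemma occ4_cons j s a b c d : j \notin s ->
  occ4 (j :: s) a b c d <-> (a = j /\ occ3 s b c d) \/ occ4 s a b c d.
Proof.
move=> js; rewrite /occ4 /occ3; split.
- case=> /(bef_cons _ _ js) h1 [/(bef_cons _ _ js) h2 /(bef_cons _ _ js) h3].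
  have nj: forall x, x \in s -> x <> j by move=> x xs E; subst x; rewrite xs in js.
  case: h3 => [[Ecj _]|h3].
    by exfalso; case: h2 => [[_ cS]|[_ cS _]]; apply: (nj c cS).
  case: h2 => [[Ebj _]|h2].
    by exfalso; case: h1 => [[_ bS]|[_ bS _]]; apply: (nj b bS).
  by case: h1 => [[-> _]|h1]; [left | right].
- case=> [[-> [h1 h2]]|[h1 [h2 h3]]].
  + split; first by apply/bef_cons => //; left; split=> //; case: (bef_in h1).
    by split; apply/bef_cons => //; right.
  + by split; [|split]; apply/bef_cons => //; right.
Qed.

Lemma occ3_map f t a b c : injective f ->
  occ3 (map f t) a b c <-> exists a0 b0 c0, [/\ a = f a0, b = f b0, c = f c0 & occ3 t a0 b0 c0].
Proof.
move=> fi; rewrite /occ3; split.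
- case=> /(bef_mapE _ _ _ fi) [a0 [b0 [-> -> h1]]] /(bef_mapE _ _ _ fi) [b1 [c0 [E -> h2]]].
  have Eb := fi _ _ E; subst b1.
  by exists a0, b0, c0.
- by case=> a0 [b0 [c0 [-> -> -> [h1 h2]]]]; split; apply/bef_map.
Qed.

Lemma occ4_map f t a b c d : injective f ->
  occ4 (map f t) a b c d <-> exists a0 b0 c0 d0,
     [/\ a = f a0, b = f b0, c = f c0, d = f d0 & occ4 t a0 b0 c0 d0].
Proof.
move=> fi; rewrite /occ4; split.
- case=> /(bef_mapE _ _ _ fi) [a0 [b0 [-> -> h1]]] [/(bef_mapE _ _ _ fi) [b1 [c0 [E -> h2]]]
   /(bef_mapE _ _ _ fi) [c1 [d0 [E' -> h3]]]].
  have Eb := fi _ _ E; have Ec := fi _ _ E'; subst b1 c1.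
  by exists a0, b0, c0, d0.
- by case=> a0 [b0 [c0 [d0 [-> -> -> -> [h1 [h2 h3]]]]]]; split; [|split]; apply/bef_map.
Qed.

Lemma av_map_bump j t : av (map (bump j) t) <-> av t.
Proof.
rewrite /av; split=> H [a [b [c [d [h p]]]]]; apply: H.
- by exists (bump j a), (bump j b), (bump j c), (bump j d); rewrite p4_bump; split=> //;
     apply/occ4_map; [exact: bump_inj | exists a, b, c, d].
- move/(occ4_map _ _ _ _ _ (@bump_inj j)): h => [a0 [b0 [c0 [d0 [E1 E2 E3 E4 h]]]]]; subst.
  by exists a0, b0, c0, d0; rewrite -(p4_bump j).
Qed.

Lemma Cc_map_bump L j t :
  Cc L (map (bump j) t) <-> Cc (if L <= j then L else L.-1) t.
Proof.
have H x : (L <= bump j x) = ((if L <= j then L else L.-1) <= x).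
  by case: (leqP L j) => h; [rewrite bump_ge | rewrite bump_ge2].
rewrite /Cc; split=> HH [a [b [c [h [h1 h2 h3 p]]]]]; apply: HH.
- exists (bump j a), (bump j b), (bump j c); rewrite p3_bump !H; split=> //.
  by apply/occ3_map; [exact: bump_inj | exists a, b, c].
- move/(occ3_map _ _ _ _ (@bump_inj j)): h => [a0 [b0 [c0 [E1 E2 E3 h]]]]; subst.
  by exists a0, b0, c0; rewrite -(p3_bump j) -!H.
Qed.

Lemma p4_j j b c d : p4 j b c d = [&& j < b, j < c, j < d & p3 b c d].
Proof.
rewrite /p4 /p3; apply/idP/idP.
- case/orP=> /and3P [h1 h2 h3]; apply/and4P; (split; [lia|lia|lia|]).
    + by apply/orP; left; apply/andP; split; lia.
    + by apply/orP; right; apply/andP; split; lia.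
- case/and4P => h1 h2 h3 /orP[/andP[h4 h5]|/andP[h4 h5]].
    + by apply/orP; left; apply/and3P; split; lia.
    + by apply/orP; right; apply/and3P; split; lia.
Qed.

Lemma av_cons j s : j \notin s ->
  av (j :: s) <-> av s /\ ~ exists b c d, occ3 s b c d /\ [/\ j < b, j < c, j < d & p3 b c d].
Proof.
move=> js; rewrite /av; split.
- move=> H; split.
  + by case=> a [b [c [d [h p]]]]; apply: H; exists a, b, c, d; split=> //; apply/occ4_cons => //; right.
  + case=> b [c [d [h [h1 h2 h3 p]]]]; apply: H; exists j, b, c, d; split.
    * by apply/occ4_cons => //; left.
    * by rewrite p4_j h1 h2 h3 p.
- case=> H1 H2 [a [b [c [d [/(occ4_cons _ _ _ _ js) [[Ea h]|h] p]]]]].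
  + subst a; apply: H2; exists b, c, d; split=> //.
    by move: p; rewrite p4_j => /and4P[? ? ? ?].
  + by apply: H1; exists a, b, c, d.
Qed.

Lemma Cc_cons L j s : j \notin s ->
  Cc L (j :: s) <-> Cc L s /\ (L <= j -> ~ exists b c, bef s b c /\ [/\ L <= b, L <= c & p3 j b c]).
Proof.
move=> js; rewrite /Cc; split.
- move=> H; split.
  + by case=> a [b [c [h q]]]; apply: H; exists a, b, c; split=> //; apply/occ3_cons => //; right.
  + move=> Lj [b [c [h [h1 h2 p]]]]; apply: H; exists j, b, c; split=> //.
    by apply/occ3_cons => //; left.
- case=> H1 H2 [a [b [c [/(occ3_cons _ _ _ js) [[Ea h]|h] [h1 h2 h3 p]]]]].
  + subst a; apply: (H2 h1); exists b, c; split=> //.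
  + by apply: H1; exists a, b, c.
Qed.

Lemma av_build j t : av (build j t) <-> av t /\ Cc j t.
Proof.
rewrite /build av_cons ?notin_build // av_map_bump; split; case=> h1 h2; split=> //.
- move=> [a [b [c [h [h3 h4 h5 p]]]]]; apply: h2.
  exists (bump j a), (bump j b), (bump j c); rewrite p3_bump !bump_gt; split=> //.
  by apply/occ3_map; [exact: bump_inj| exists a, b, c].
- move=> [a [b [c [/(occ3_map _ _ _ _ (@bump_inj j)) [a0 [b0 [c0 [E1 E2 E3 h]]]] q]]]]; subst.
  apply: h2; exists a0, b0, c0; split=> //.
  by move: q; rewrite p3_bump !bump_gt; case.
Qed.


Lemma bumpG j x : j <= x -> bump j x = x.+1. Proof. by move=> h; rewrite bumpE h. Qed.
Lemma bumpL j x : x < j -> bump j x = x. Proof. by move=> h; rewrite bumpE leqNgt h. Qed.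

Lemma Cc_mono L L' t : L <= L' -> Cc L t -> Cc L' t.
Proof.
move=> h H [a [b [c [o [h1 h2 h3 p]]]]]; apply: H; exists a, b, c; split=> //; split=> //; lia.
Qed.

Lemma Dd_mono u v t : u <= v -> Dd v t -> Dd u t.
Proof. move=> h [a [b [o [h1 h2]]]]; exists a, b; split=> //; split=> //; lia. Qed.

Lemma nDd_Cc v t : ~ Dd v t -> Cc v t.
Proof.
move=> H [a [b [c [[o1 o2] [h1 h2 h3 /orP[/andP[p1 p2]|/andP[p1 p2]]]]]]]; apply: H.
- by exists b, c; split=> //; split=> //.
- by exists a, b; split=> //; split=> //.
Qed.

Lemma asc_between L t b c v : Cc L t -> bef t b c -> b < v -> v < c -> v \in t -> L <= b ->
  bef t b v /\ bef t v c.
Proof.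
move=> H o h1 h2 vt hL; have [bt ct] := bef_in o.
have vb : v <> b by move=> E; lia.
have vc : v <> c by move=> E; lia.
case: (bef_total vt bt vb) => o1.
  exfalso; apply: H; exists v, b, c; split; first by split.
  split; try lia; by apply/orP; right; apply/andP; split.
case: (bef_total vt ct vc) => o2; first by split.
exfalso; apply: H; exists b, c, v; split; first by split.
split; try lia; by apply/orP; left; apply/andP; split.
Qed.

Lemma Cc_build L j t : Cc L (build j t) <->
  Cc (if L <= j then L else L.-1) t /\
  (L <= j -> ~ exists b c, bef t b c /\ [/\ L <= bump j b, L <= bump j c & p3 j (bump j b) (bump j c)]).
Proof.
rewrite /build Cc_cons ?notin_build // Cc_map_bump; split; case=> h1 h2; split=> // hL.
- case=> b [c [o q]]; apply: (h2 hL); exists (bump j b), (bump j c); split=> //.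
  by apply/bef_map => //; exact: bump_inj.
- case=> b [c [/(bef_mapE _ _ _ (@bump_inj j)) [b0 [c0 [-> -> o]]] q]].
  by apply: (h2 hL); exists b0, c0.
Qed.

Lemma case_lt L j t : Dd j t -> Cc j t -> (Cc L (build j t) <-> j < L).
Proof.
move=> D C; rewrite Cc_build; case: (leqP L j) => hL.
- split=> // [[_ H]]; exfalso; apply: (H isT).
  case: D => a [b [o [h1 h2]]]; exists a, b; split=> //.
  rewrite !bumpG; try lia; split; try lia.
  by apply/orP; left; apply/andP; split; lia.
- split=> // _; split=> //.
  by apply: Cc_mono C; lia.
Qed.

Lemma case_gt L j t y : 0 < j -> ~ Dd j.-1 t -> j.-1 \in t -> y \in t -> j <= y ->
  (Cc L (build j t) <-> j <= L).
Proof.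
move=> j0 D jt yt jy; rewrite Cc_build; case: (ltnP L j) => hL.
- split=> // [[_ H]]; exfalso; apply: H; first lia.
  have ne : j.-1 <> y by lia.
  case: (bef_total jt yt ne) => o.
  + exists j.-1, y; split=> //; rewrite bumpL ?bumpG; try lia; split; try lia.
    by apply/orP; right; apply/andP; split; lia.
  + by exfalso; apply: D; exists y, j.-1; split=> //; lia.
- split=> // _; split.
  + by apply: Cc_mono (nDd_Cc D); case: ifP; lia.
  + move=> hL2 [b [c [o [h1 h2 /orP[/andP[p1 p2]|/andP[p1 p2]]]]]].
    * apply: D; exists b, c; split=> //.
      move: h1 h2 p1 p2; rewrite !bumpE; case: (leqP j b); case: (leqP j c); lia.
    * move: h1 h2 p1 p2; rewrite !bumpE; case: (leqP j b); case: (leqP j c); lia.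
Qed.

Lemma case_eq L j t : ~ Dd j t -> Dd j.-1 t -> (Cc L (build j t) <-> Cc L t).
Proof.
move=> nD D.
have j0 : 0 < j by case: j nD D => // nD D; exfalso; exact: nD.
have Cj := nDd_Cc nD.
rewrite Cc_build; case: (leqP L j) => hL; last first.
  split=> _; [apply: Cc_mono Cj; lia | split=> //; apply: Cc_mono Cj; lia].
split; first by case.
move=> CL; split=> // _ [b [c [o [h1 h2 /orP[/andP[p1 p2]|/andP[p1 p2]]]]]].
- apply: nD; exists b, c; split=> //.
  move: h1 h2 p1 p2; rewrite !bumpE; case: (leqP j b); case: (leqP j c); lia.
- have bj : b < j by move: p1; rewrite bumpE; case: (leqP j b); lia.
  have cj : j <= c by move: p2; rewrite bumpE; case: (leqP j c); lia.
  rewrite bumpL // in h1.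
  case: D => y [z [oyz [hz1 hz2]]].
  have zE : z = j.-1.
    case: (leqP j z) => hz; last lia.
    by exfalso; apply: nD; exists y, z; split=> //; lia.
  subst z.
  have ojc : bef t j.-1 c.
    case: (ltngtP b j.-1) => hb; last by rewrite -hb.
    * by case: (asc_between CL o hb _ (proj2 (bef_in oyz)) h1) => //; lia.
    * lia.
  have oyc := bef_trans oyz ojc.
  have nyc := bef_neq oyc.
  case: (ltngtP y c) => hyc; last by [].
  + apply: CL; exists y, j.-1, c; split; first by split.
    split; try lia; by apply/orP; right; apply/andP; split; lia.
  + by apply: nD; exists y, c; split=> //; lia.
Qed.

Lemma index_build j t x : index (bump j x) (build j t) = (index x t).+1.
Proof. by rewrite /build /= (negPf (neq_bump j x)) index_map //; exact: bump_inj. Qed.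

Lemma okp_build m j t : 0 < j -> j <= m.-2 ->
  (okp m (build j t) <-> okp m.-1 t /\ Cc j t).
Proof.
move=> j0 jm; rewrite /okp av_build /adj.
have E0 : 0 = bump j 0 by rewrite bumpL.
have E1 : m.-1 = bump j m.-1.-1 by rewrite bumpG; lia.
rewrite {1}E0 {1}E1 !index_build; split.
- by case=> [[? ?] ?]; split=> //; split=> //; lia.
- by case=> [[? ?] ?]; split; [split|lia].
Qed.

Lemma okp_build0 m t L : okp m (build 0 t) -> 0 < L -> Cc L (build 0 t).
Proof.
case=> /av_build [_ C] _ L0; apply/Cc_build; rewrite leqNgt L0 /=; split; last lia.
by apply: Cc_mono C.
Qed.

Lemma okp_buildm m t : 0 < m -> ~ okp m (build m.-1 t).
Proof. by move=> m0 [_]; rewrite /adj /build /= eqxx. Qed.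


Lemma inPn n s : s \in Pn n <-> uniq s /\ (forall x, (x \in s) = (x < n)).
Proof.
rewrite /Pn mem_permutations; split.
- move=> p; split; first by rewrite (perm_uniq p) iota_uniq.
  by move=> x; rewrite (perm_mem p) mem_iota.
- case=> u m; apply: uniq_perm => //; first exact: iota_uniq.
  by move=> x; rewrite m mem_iota.
Qed.

Definition term m L j t :=
  B (okp m (build j t) /\ Cc L (build j t) /\ ~ Cc L.-1 (build j t)).

Definition Qj L t j := (Dd j t /\ Cc j t /\ j = L.-1) \/
   (~ Dd j t /\ Dd j.-1 t /\ Cc L t /\ ~ Cc L.-1 t) \/ (~ Dd j.-1 t /\ j = L).

Lemma term_eq m L t j : t \in Pn m.-1 -> 2 <= L -> L <= m.-2 -> j < m ->
  term m L j t = B (0 < j /\ j <= m.-2 /\ okp m.-1 t /\ Qj L t j).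
Proof.
move=> /inPn [tu tm] L2 Lm jm; rewrite /term.
case: (posnP j) => j0.
  subst j; transitivity false; [apply: BF | symmetry; apply: BF; by case].
  by case=> ok [_ H]; apply: H; apply: okp_build0 ok _; lia.
case: (leqP j m.-2) => jm2; last first.
  have -> : j = m.-1 by lia.
  transitivity false; [apply: BF | symmetry; apply: BF; lia].
  by case=> ok _; apply: (okp_buildm (m:=m)) ok; lia.
apply: Beq; rewrite okp_build //.
have DD : Dd j t -> Dd j.-1 t by apply: Dd_mono; lia.
case: (classic (okp m.-1 t)) => ok; last first.
  by split => [[[h _] _]|[_ [_ [h _]]]]; exfalso; apply: ok.
rewrite /Qj.
case: (classic (Dd j t)) => hD.
- case: (classic (Cc j t)) => hC; last first.
    split; first by case=> [[_ h] _]; exfalso; apply: hC.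
    case=> _ [_ [_ [[_ [h _]]|[[h _]|[h _]]]]]; exfalso.
    + by apply: hC.
    + by apply: h.
    + by apply: h; apply: DD.
  rewrite (case_lt L hD hC) (case_lt L.-1 hD hC); split.
  + case=> _ [h1 h2]; do 3 (split=> //); left; split=> //; split=> //; lia.
  + case=> _ [_ [_ [[_ [_ E]]|[[h _]|[h _]]]]]; first by split; [split | split; lia].
    * by exfalso; apply: h.
    * by exfalso; apply: h; apply: DD.
- have hC := nDd_Cc hD.
  case: (classic (Dd j.-1 t)) => hD1.
  + rewrite (case_eq L hD hD1) (case_eq L.-1 hD hD1); split.
    * case=> _ [h1 h2]; do 3 (split=> //); right; left; done.
    * case=> _ [_ [_ [[h _]|[[_ [_ [h1 h2]]]|[h _]]]]] //; exfalso; by apply: h.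
  + have jt : j.-1 \in t by rewrite tm; lia.
    have yt : m.-2 \in t by rewrite tm; lia.
    rewrite (case_gt L j0 hD1 jt yt jm2) (case_gt L.-1 j0 hD1 jt yt jm2); split.
    * case=> _ [h1 h2]; do 3 (split=> //); right; right; split=> //; lia.
    * case=> _ [_ [_ [[h _]|[[_ [h _]]|[_ E]]]]].
      - by exfalso; exact: hD h.
      - by exfalso; exact: hD1 h.
      - by split; [split | split; lia].
Qed.

Lemma sum_pick (r : seq nat) (F : nat -> bool) : uniq r ->
  (forall i j, F i -> F j -> i = j) -> \sum_(j <- r) F j = has F r.
Proof.
move=> u U; elim: r u => [|a r IH] /=; first by rewrite big_nil.
case/andP=> ar u; rewrite big_cons IH //.
case Fa: (F a) => //=.
case Hr: (has F r) => //.
by case/hasP: Hr => x xr Fx; rewrite (U _ _ Fa Fx) xr in ar.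
Qed.

Lemma tail_sum m L t : t \in Pn m.-1 -> 2 <= L -> L <= m.-2 ->
  \sum_(j <- iota 0 m) term m L j t = B (okp m.-1 t /\ Cc L t).
Proof.
move=> tP L2 Lm.
have tP' := tP; move/inPn: tP' => [tu tm].
rewrite (eq_big_seq (fun j => nat_of_bool (B (0 < j /\ j <= m.-2 /\ okp m.-1 t /\ Qj L t j)))); last first.
  by move=> j; rewrite mem_iota add0n => /andP[_ jm]; rewrite (term_eq tP L2 Lm jm).
rewrite sum_pick ?iota_uniq //; last first.
  move=> i j /BP [i0 [im [_ Qi]]] /BP [j0 [jm [_ Qj']]].
  have Dmono : forall u v, u <= v -> Dd v t -> Dd u t by move=> u v; apply: Dd_mono.
  have Cmono : forall u v, u <= v -> Cc u t -> Cc v t by move=> u v; apply: Cc_mono.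
  case: Qi => [[D1 [C1 E1]]|[[nD1 [D1' [C1 nC1]]]|[nD1 E1]]];
  case: Qj' => [[D2 [C2 E2]]|[[nD2 [D2' [C2 nC2]]]|[nD2 E2]]]; try lia.
  - by exfalso; apply: nC2; rewrite -E1.
  - by exfalso; apply: nD2; rewrite E2 -E1.
  - by exfalso; apply: nC1; rewrite -E2.
  - case: (ltngtP i j) => // h; exfalso.
    + by apply: nD1; apply: (Dmono _ j.-1) => //; lia.
    + by apply: nD2; apply: (Dmono _ i.-1) => //; lia.
  - by exfalso; apply: nC1; rewrite -E2; apply: nDd_Cc.
  - by exfalso; apply: nD1; rewrite E1 -E2.
  - by exfalso; apply: nC2; rewrite -E1; apply: nDd_Cc.
congr nat_of_bool; apply/hasP/BP.
- case=> j _ /BP [_ [_ [ok Q]]]; split=> //.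
  case: Q => [[_ [C E]]|[[_ [_ [C _]]]|[nD E]]] //; subst j.
  + by apply: Cc_mono C; lia.
  + by apply: Cc_mono (nDd_Cc nD); lia.
- case=> ok CL.
  case: (classic (Cc L.-1 t)) => CL1.
  + case: (classic (Dd L.-1 t)) => DL1.
    * exists L.-1; first by rewrite mem_iota; lia.
      apply/BP; do 2 (split; first lia); split=> //; left; split=> //; split=> //.
    * exists L; first by rewrite mem_iota; lia.
      apply/BP; do 2 (split; first lia); split=> //; right; right; split=> //.
  + have DL1 : Dd L.-1 t by apply: NNPP => h; apply: CL1; apply: nDd_Cc.
    have ex : exists v, ~ Dd v t.
      exists m.-2 => [[a [b [o [h1 h2]]]]].
      have := proj1 (bef_in o); rewrite tm; lia.
    pose P v := B (~ Dd v t).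
    have exP : exists v, P v by case: ex => v h; exists v; apply/BP.
    case: (ex_minnP exP) => c /BP nDc minc.
    have cm : c <= m.-2 by apply: minc; apply/BP => [[a [b [o [h1 h2]]]]];
      have := proj1 (bef_in o); rewrite tm; lia.
    have cL : L.-1 < c.
      rewrite ltnNge; apply/negP=> h; apply: nDc; apply: Dd_mono DL1; lia.
    have Dc1 : Dd c.-1 t.
      apply: NNPP => h; have := minc c.-1 (introT (BP _) h); lia.
    exists c; first by rewrite mem_iota; lia.
    apply/BP; do 2 (split; first lia); split=> //; right; left; done.
Qed.


Lemma count_sum (T : Type) (a : pred T) s : count a s = \sum_(x <- s) a x.
Proof. by elim: s => [|x s IH] /=; rewrite ?big_nil ?big_cons ?IH. Qed.

Lemma build_inj j : injective (build j).
Proof. by move=> t1 t2 [] /(inj_map (@bump_inj j)). Qed.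

Lemma build_Pn n j t : t \in Pn n.-1 -> j < n -> build j t \in Pn n.
Proof.
move=> /inPn [tu tm] jn; apply/inPn; split.
- by rewrite /build /= notin_build map_inj_uniq //; exact: bump_inj.
- move=> x; rewrite /build inE; case: (eqVneq x j) => [->|xj] //=.
  apply/mapP/idP.
  + by case=> y; rewrite tm bumpE => yn ->; case: (leqP j y); lia.
  + move=> xn; exists (unbump j x); last by rewrite unbumpK //= inE eq_sym.
    by rewrite tm unbumpE; move: xj => /eqP xj; case: (ltnP j x); lia.
Qed.

Lemma Pn_build n j s : 0 < n -> s \in Pn n -> head 0 s = j ->
  exists2 t, t \in Pn n.-1 & s = build j t.
Proof.
move=> n0 /inPn [su sm] hs.
case: s su sm hs => [|x s'] su sm /= hs.
  by have := sm 0; rewrite in_nil; lia.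
subst x; case/andP: su => js su.
have jn : j < n by rewrite -sm inE eqxx.
exists (map (unbump j) s').
- apply/inPn; split.
  + rewrite map_inj_in_uniq // => a b aS bS.
    have aj : a != j by apply: contraNneq js => <-.
    have bj : b != j by apply: contraNneq js => <-.
    by move=> E; rewrite -(unbumpK aj) -(unbumpK bj) E.
  + move=> y; apply/mapP/idP.
    * case=> x xs ->; have xn : x < n by rewrite -sm inE xs orbT.
      have xj : x != j by apply: contraNneq js => <-.
      by rewrite unbumpE; move: xj => /eqP xj; case: (ltnP j x); lia.
    * move=> yn; exists (bump j y); last by rewrite bumpK.
      have := sm (bump j y); rewrite inE eq_sym (negPf (neq_bump _ _)) /= => ->.
      by rewrite bumpE; case: (leqP j y); lia.
- rewrite /build -map_comp; congr (_ :: _).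
  rewrite -{1}(map_id s'); apply/eq_in_map => x xs /=.
  by rewrite unbumpK // inE; apply: contraNneq js => <-.
Qed.

Lemma decomp n (p : pred (seq nat)) : 0 < n ->
  count p (Pn n) = \sum_(j <- iota 0 n) count (fun t => p (build j t)) (Pn n.-1).
Proof.
move=> n0.
have E1 : count p (Pn n) = \sum_(j <- iota 0 n) count (fun s => p s && (head 0 s == j)) (Pn n).
  rewrite count_sum (eq_bigr (fun j => \sum_(s <- Pn n) (p s && (head 0 s == j)))); last first.
    by move=> j _; rewrite count_sum.
  rewrite exchange_big; apply: eq_big_seq => s sP.
  rewrite (@sum_pick _ (fun j => p s && (head 0 s == j))) ?iota_uniq //; last first.
    by move=> i k /andP[_ /eqP <-] /andP[_ /eqP <-].
  congr nat_of_bool; apply/idP/hasP.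
  - move=> ps; exists (head 0 s); rewrite ?ps ?eqxx //.
    move/inPn: sP => [_ sm]; rewrite mem_iota /= add0n -sm.
    by case: s sm ps => [|x s] sm ps /=; [have := sm 0; rewrite in_nil; lia | rewrite inE eqxx].
  - by case=> j _ /andP[].
rewrite E1; apply: eq_big_seq => j; rewrite mem_iota add0n => /andP[_ jn].
rewrite -!size_filter -[in RHS](size_map (build j)); apply: perm_size.
apply: uniq_perm.
- by apply: filter_uniq; exact: permutations_uniq.
- rewrite map_inj_uniq; [apply: filter_uniq; exact: permutations_uniq | exact: build_inj].
move=> s; rewrite mem_filter; apply/andP/mapP.
- case=> /andP[ps /eqP hs] sP.
  have [t tP Es] := Pn_build n0 sP hs.
  by exists t => //; rewrite mem_filter tP -Es ps.
- case=> t; rewrite mem_filter => /andP[pt tP] ->; split; last exact: build_Pn.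
  by rewrite pt /= eqxx.
Qed.

Lemma E1 n L : 0 < L -> L <= n.-2 ->
  count (fun s => B (okp n s /\ head 0 s = L)) (Pn n) =
  count (fun t => B (okp n.-1 t /\ Cc L t)) (Pn n.-1).
Proof.
move=> L0 Ln; rewrite decomp; last lia.
rewrite (bigD1_seq L) ?iota_uniq //=; last by rewrite mem_iota; lia.
rewrite big1_seq ?addn0.
- apply: eq_count => t; apply: Beq; rewrite okp_build //; split.
  + by case.
  + by move=> h; split.
- move=> j /andP[jL _]; rewrite (eq_count (a2 := pred0)) ?count_pred0 // => t /=.
  by apply: BF => [[_ E]]; rewrite E eqxx in jL.
Qed.

Lemma E2 m L : 2 <= L -> L <= m.-2 ->
  count (fun s => B (okp m s /\ Cc L s /\ ~ Cc L.-1 s)) (Pn m) =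
  count (fun t => B (okp m.-1 t /\ Cc L t)) (Pn m.-1).
Proof.
move=> L2 Lm; rewrite decomp; last lia.
rewrite (eq_bigr (fun j => \sum_(t <- Pn m.-1) term m L j t)); last first.
  by move=> j _; rewrite count_sum.
rewrite exchange_big count_sum; apply: eq_big_seq => t tP.
exact: tail_sum.
Qed.


Definition phi n (s : 'S_n) : seq nat := [seq nat_of_ord (s i) | i <- enum 'I_n].

Lemma size_phi n (s : 'S_n) : size (phi s) = n.
Proof. by rewrite /phi size_map size_enum_ord. Qed.

Lemma nth_phi n (s : 'S_n) (i : 'I_n) : nth 0 (phi s) i = s i.
Proof. by rewrite /phi (nth_map i) ?size_enum_ord // nth_ord_enum. Qed.

Lemma phi_uniq n (s : 'S_n) : uniq (phi s).
Proof.
rewrite /phi map_inj_uniq ?enum_uniq // => i j /val_inj; exact: perm_inj.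
Qed.

Lemma mem_phi n (s : 'S_n) (i : 'I_n) : nat_of_ord (s i) \in phi s.
Proof. by apply: map_f; rewrite mem_enum. Qed.

Lemma index_phi n (s : 'S_n) (i : 'I_n) : index (nat_of_ord (s i)) (phi s) = i.
Proof. by rewrite -nth_phi index_uniq ?size_phi ?phi_uniq. Qed.

Lemma phi_Pn n (s : 'S_n) : phi s \in Pn n.
Proof.
apply/inPn; split; first exact: phi_uniq.
move=> x; apply/mapP/idP.
- by case=> i _ ->.
- move=> xn; exists ((s^-1)%g (Ordinal xn)); first by rewrite mem_enum.
  by rewrite permKV.
Qed.

Lemma phi_inj n : injective (@phi n).
Proof. by move=> s1 s2 E; apply/permP => i; apply: ord_inj; rewrite -!nth_phi E. Qed.

Lemma phi_surj n t : t \in Pn n -> exists s : 'S_n, phi s = t.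
Proof.
move=> /inPn [tu tm].
have sz : size t = n.
  have: perm_eq t (iota 0 n) by apply: uniq_perm => // [|x]; rewrite ?iota_uniq // mem_iota tm.
  by move/perm_size; rewrite size_iota.
have H (i : 'I_n) : nth 0 t i < n by rewrite -tm mem_nth // sz.
pose f (i : 'I_n) := Ordinal (H i).
have fi : injective f.
  move=> i j /(congr1 val) /= E; apply: val_inj => /=.
  by apply/eqP; rewrite -(nth_uniq 0 _ _ tu) ?sz // E.
exists (perm fi); apply: (@eq_from_nth _ 0); rewrite size_phi // => k kn.
by rewrite -[k]/(val (Ordinal kn)) nth_phi permE.
Qed.

Lemma card_phi n (P : pred (seq nat)) :
  #|[set s : 'S_n | P (phi s)]| = count P (Pn n).
Proof.
rewrite cardE -size_filter -(size_map (@phi n)); apply: perm_size.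
apply: uniq_perm.
- by rewrite map_inj_uniq ?enum_uniq //; exact: phi_inj.
- by apply: filter_uniq; exact: permutations_uniq.
move=> t; rewrite mem_filter; apply/mapP/andP.
- by case=> s; rewrite mem_enum inE => Ps ->; split=> //; exact: phi_Pn.
- case=> Pt tP; have [s Es] := phi_surj tP.
  by exists s => //; rewrite mem_enum inE Es.
Qed.


Lemma idx_lt n (s : 'S_n) x : x \in phi s -> index x (phi s) < n.
Proof. by move: (index_mem x (phi s)); rewrite size_phi => ->. Qed.

Lemma val_idx n (s : 'S_n) x (h : x \in phi s) : nat_of_ord (s (Ordinal (idx_lt h))) = x.
Proof. by rewrite -nth_phi /= nth_index. Qed.

Lemma bef_phi n (s : 'S_n) (i j : 'I_n) : bef (phi s) (s i) (s j) <-> i < j.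
Proof. by rewrite /bef !mem_phi !index_phi; split; [case | ]. Qed.

Ltac bsolve := repeat (apply/andP; split); try (apply/implyP => ?); try lia;
  try (apply/eqP; first [ lia | apply/negbTE/negP => ?; lia]).

Lemma occ4_ord n (s : 'S_n) a b c d : occ4 (phi s) a b c d ->
  exists (ia ib ic id : 'I_n), [/\ ia < ib, ib < ic, ic < id &
     [/\ nat_of_ord (s ia) = a, nat_of_ord (s ib) = b, nat_of_ord (s ic) = c & nat_of_ord (s id) = d]].
Proof.
case=> [[ha hb hab] [[_ hc hbc] [_ hd hcd]]].
exists (Ordinal (idx_lt ha)), (Ordinal (idx_lt hb)), (Ordinal (idx_lt hc)), (Ordinal (idx_lt hd)).
by split=> //; split; apply: val_idx.
Qed.

Lemma ord_occ4 n (s : 'S_n) (ia ib ic id : 'I_n) : ia < ib -> ib < ic -> ic < id ->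
  occ4 (phi s) (s ia) (s ib) (s ic) (s id).
Proof. by move=> h1 h2 h3; split; [|split]; apply/bef_phi. Qed.

Lemma c1243 n (s : 'S_n) : contains s [:: 1; 2; 4; 3] <->
  exists a b c d, occ4 (phi s) a b c d /\ [&& a < b, b < d & d < c].
Proof.
rewrite /contains; split.
- case/existsP => f /forallP H.
  have G (x y : 'I_4) := forallP (H x) y.
  pose o0 := @Ordinal 4 0 isT. pose o1 := @Ordinal 4 1 isT.
  pose o2 := @Ordinal 4 2 isT. pose o3 := @Ordinal 4 3 isT.
  have /andP[/implyP p01 /eqP v01] := G o0 o1.
  have /andP[/implyP p12 _] := G o1 o2.
  have /andP[/implyP p23 _] := G o2 o3.
  have /andP[_ /eqP v13] := G o1 o3.
  have /andP[_ /eqP v32] := G o3 o2.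
  exists (nat_of_ord (s (f o0))), (nat_of_ord (s (f o1))), (nat_of_ord (s (f o2))), (nat_of_ord (s (f o3))); split.
    by apply: ord_occ4; [exact: (p01 isT) | exact: (p12 isT) | exact: (p23 isT)].
  by rewrite v01 v13 v32.
- case=> a [b [c [d [/occ4_ord [ia [ib [ic [id [h1 h2 h3 [ea eb ec ed]]]]]]] r]]].
  apply/existsP; exists [ffun k : 'I_4 => nth ia [:: ia; ib; ic; id] k].
  apply/forallP => x; apply/forallP => y; rewrite !ffunE.
  move: r; rewrite -ea -eb -ec -ed => /and3P[r1 r2 r3].
  by case: x => [[|[|[|[|x]]]] hx] //; case: y => [[|[|[|[|y]]]] hy] //=; bsolve.
Qed.

Lemma c1324 n (s : 'S_n) : contains s [:: 1; 3; 2; 4] <->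
  exists a b c d, occ4 (phi s) a b c d /\ [&& a < c, c < b & b < d].
Proof.
rewrite /contains; split.
- case/existsP => f /forallP H.
  have G (x y : 'I_4) := forallP (H x) y.
  pose o0 := @Ordinal 4 0 isT. pose o1 := @Ordinal 4 1 isT.
  pose o2 := @Ordinal 4 2 isT. pose o3 := @Ordinal 4 3 isT.
  have /andP[/implyP p01 _] := G o0 o1.
  have /andP[/implyP p12 _] := G o1 o2.
  have /andP[/implyP p23 _] := G o2 o3.
  have /andP[_ /eqP v02] := G o0 o2.
  have /andP[_ /eqP v21] := G o2 o1.
  have /andP[_ /eqP v13] := G o1 o3.
  exists (nat_of_ord (s (f o0))), (nat_of_ord (s (f o1))), (nat_of_ord (s (f o2))), (nat_of_ord (s (f o3))); split.
    by apply: ord_occ4; [exact: (p01 isT) | exact: (p12 isT) | exact: (p23 isT)].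
  by rewrite v02 v21 v13.
- case=> a [b [c [d [/occ4_ord [ia [ib [ic [id [h1 h2 h3 [ea eb ec ed]]]]]]] r]]].
  apply/existsP; exists [ffun k : 'I_4 => nth ia [:: ia; ib; ic; id] k].
  apply/forallP => x; apply/forallP => y; rewrite !ffunE.
  move: r; rewrite -ea -eb -ec -ed => /and3P[r1 r2 r3].
  by case: x => [[|[|[|[|x]]]] hx] //; case: y => [[|[|[|[|y]]]] hy] //=; bsolve.
Qed.


Lemma BandE (P Q : Prop) : B (P /\ Q) = B P && B Q.
Proof. by apply/BP/andP => [[/BP ? /BP ?]|[/BP ? /BP ?]]. Qed.
Lemma BnotE (P : Prop) : B (~ P) = ~~ B P.
Proof. by apply/BP/negP => h1 h2; apply: h1; [apply/BP | move/BP: h2]. Qed.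

Lemma pred_phi n l (s : 'S_n) : 0 < n ->
  [&& avoids s [:: 1; 2; 4; 3], avoids s [:: 1; 3; 2; 4],
      [exists i : 'I_n, exists j : 'I_n,
          [&& s i == 0 :> nat, s j == n.-1 :> nat & j == i.+1 :> nat]]
    & [exists i : 'I_n, (i == 0 :> nat) && (s i == l.-1 :> nat)] ] =
  B (okp n (phi s) /\ head 0 (phi s) = l.-1).
Proof.
move=> n0; apply/and4P/BP.
- case=> A1 A2 A3 A4; split; first split.
  + move=> [a [b [c [d [o /orP[r|r]]]]]].
    * by move/negP: A1; apply; apply/c1243; exists a, b, c, d.
    * by move/negP: A2; apply; apply/c1324; exists a, b, c, d.
  + case/existsP: A3 => i /existsP [j /and3P [/eqP hi /eqP hj /eqP hij]].
    by rewrite /adj -hi -hj !index_phi.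
  + case/existsP: A4 => i /andP[/eqP i0 /eqP hi].
    have -> : head 0 (phi s) = nth 0 (phi s) i by rewrite i0 nth0.
    by rewrite nth_phi.
- case=> [[av ad] hd].
  have [_ pm] := proj1 (inPn n (phi s)) (phi_Pn s).
  have h0 : 0 \in phi s by rewrite pm.
  have h1 : n.-1 \in phi s by rewrite pm; lia.
  split.
  + apply/negP => /c1243 [a [b [c [d [o r]]]]]; apply: av; exists a, b, c, d.
    by rewrite /p4 r.
  + apply/negP => /c1324 [a [b [c [d [o r]]]]]; apply: av; exists a, b, c, d.
    by rewrite /p4 r orbT.
  + apply/existsP; exists (Ordinal (idx_lt h0)); apply/existsP; exists (Ordinal (idx_lt h1)).
    by rewrite !val_idx !eqxx /= ad.
  + apply/existsP; exists (Ordinal n0) => /=.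
    by have := nth_phi s (Ordinal n0); rewrite /= nth0 hd => <-; rewrite !eqxx.
Qed.

Lemma tc_count n l : 0 < n ->
  t_count n l = count (fun t => B (okp n t /\ head 0 t = l.-1)) (Pn n).
Proof.
move=> n0; rewrite /t_count -card_phi; apply: eq_card => s; rewrite !inE.
exact: pred_phi.
Qed.

Unset Implicit Arguments.

Theorem lemma5p5 (n l : nat) (hn : 2 <= n) (hl3 : 3 <= l) (hl : l <= n - 2) :
  t_count n l = t_count n l.-1 + t_count n.-1 l.
Proof.
rewrite !tc_count; try lia.
rewrite (@E1 n l.-1); try lia.
rewrite (@E1 n l.-1.-1); try lia.
rewrite (@E1 n.-1 l.-1); try lia.
rewrite -(@E2 n.-1 l.-1); try lia.
rewrite !count_sum -big_split; apply: eq_bigr => t _ /=.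
have mono : Cc l.-1.-1 t -> Cc l.-1 t by apply: Cc_mono; lia.
rewrite !BandE BnotE.
move: mono; case: (BP (Cc l.-1.-1 t)); case: (BP (Cc l.-1 t));
  case: (B (av t)); case: (B (adj n.-1 t)) => //=.
all: by move=> h1 h2 m; case: h1; apply: m.
Qed.
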